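(* Let $\eta$ be a primitive $7$-th root of unity and let $F(x,y,z)= x^7 + y^7 + z^7 + 14(x^3 y^2 + x^2 z^3 + y^3 z^2 + xyz) + 7(x^5 y + x z^5 + y^5 z + x y^3 + x^3 z + y z^3) + 7( x y^2 z^4 + x^2 y^4 z + x^4 y z^2 + x^2 y^2 z^2)$. Let $G(x,y,z)$ be a real polynomial with $G(\eta x,\eta^2y,\eta^4z)=G(x,y,z)$, $G=1$ on the plane $x+y+z=1$, only non-negative coefficients, and $G(0,0,0)=0$. Then either $G=F$ or $\deg G\ge 10$.
   Context: The invariance condition is equivalent to: every monomial $x^ay^bz^c$ of $G$ satisfies $a+2b+4c\equiv0\pmod 7$. *)

(* Defs.v *)
From mathcomp Require Import all_boot all_algebra.
From mathcomp Require Import Rstruct.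
From mathcomp.real_closed Require Import complex.
From mathcomp.multinomials Require Import mpoly.

Set Implicit Arguments.
Unset Strict Implicit.
Unset Printing Implicit Defensive.

Import GRing.Theory Num.Theory.
Local Open Scope ring_scope.

Notation RR := Rdefinitions.R.

Definition pt3 (T : Type) (a b c : T) : 'I_3 -> T :=
  fun i => nth a [:: a; b; c] i.

Definition vx : {mpoly RR[3]} := 'X_(@Ordinal 3 0 isT).
Definition vy : {mpoly RR[3]} := 'X_(@Ordinal 3 1 isT).
Definition vz : {mpoly RR[3]} := 'X_(@Ordinal 3 2 isT).

Definition Fpoly : {mpoly RR[3]} :=
  vx ^+ 7 + vy ^+ 7 + vz ^+ 7
  + 14%:R * (vx ^+ 3 * vy ^+ 2 + vx ^+ 2 * vz ^+ 3 + vy ^+ 3 * vz ^+ 2 + vx * vy * vz)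
  + 7%:R * (vx ^+ 5 * vy + vx * vz ^+ 5 + vy ^+ 5 * vz + vx * vy ^+ 3 + vx ^+ 3 * vz + vy * vz ^+ 3)
  + 7%:R * (vx * vy ^+ 2 * vz ^+ 4 + vx ^+ 2 * vy ^+ 4 * vz + vx ^+ 4 * vy * vz ^+ 2
            + vx ^+ 2 * vy ^+ 2 * vz ^+ 2).

(** Total degree of a nonzero multivariate polynomial (msize p = deg p + 1). *)
Definition mdegree (n : nat) (R : nzRingType) (p : {mpoly R[n]}) : nat := (msize p).-1.

Definition eta_invariant (eta : RR[i]) (G : {mpoly RR[3]}) : Prop :=
  forall x y z : RR[i],
    (map_mpoly (@real_complex RR) G).@[pt3 (eta * x) (eta ^+ 2 * y) (eta ^+ 4 * z)]
    = (map_mpoly (@real_complex RR) G).@[pt3 x y z].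

(* Main.v *)
Require Import Defs.
From mathcomp Require Import all_boot all_algebra.
From mathcomp Require Import Rstruct.
From mathcomp.real_closed Require Import complex.
From mathcomp.multinomials Require Import mpoly.
From mathcomp Require Import zify ring lra.
Import GRing.Theory Num.Theory.
Local Open Scope ring_scope.

Definition i0 : 'I_3 := @Ordinal 3 0 isT.
Definition i1 : 'I_3 := @Ordinal 3 1 isT.
Definition i2 : 'I_3 := @Ordinal 3 2 isT.

Lemma ord3P (P : 'I_3 -> Prop) : P i0 -> P i1 -> P i2 -> forall i, P i.
Proof.
move=> H0 H1 H2 [[|[|[|k]]] Hk] //.
- by rewrite (_ : Ordinal Hk = i0) //; apply: val_inj.
- by rewrite (_ : Ordinal Hk = i1) //; apply: val_inj.
- by rewrite (_ : Ordinal Hk = i2) //; apply: val_inj.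
Qed.

Lemma prod3 (R : comNzRingType) (F : 'I_3 -> R) : \prod_(i < 3) F i = F i0 * F i1 * F i2.
Proof.
rewrite !big_ord_recl big_ord0 mulr1 mulrA.
by congr (F _ * F _ * F _); apply: val_inj.
Qed.

Definition kr (m : 'X_{1..3}) : nat := (m i0 + 10 * m i1 + 100 * m i2)%N.

Lemma mdeg_ge (m : 'X_{1..3}) i : (m i <= mdeg m)%N.
Proof.
rewrite mdegE (bigD1 i) //=; exact: leq_addr.
Qed.

Lemma kr_inj {m m' : 'X_{1..3}} : (mdeg m < 10)%N -> (mdeg m' < 10)%N -> kr m = kr m' -> m = m'.
Proof.
move=> H H' E.
have a0 := mdeg_ge m i0; have a1 := mdeg_ge m i1; have a2 := mdeg_ge m i2.
have b0 := mdeg_ge m' i0; have b1 := mdeg_ge m' i1; have b2 := mdeg_ge m' i2.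
move: E; rewrite /kr => E.
apply/mnmP; apply: ord3P; lia.
Qed.

Lemma kron (R : numDomainType) (r : seq 'X_{1..3}) (a : 'X_{1..3} -> R) :
  uniq r -> (forall m, m \in r -> (mdeg m < 10)%N) ->
  (forall t : R, \sum_(m <- r) a m * t ^+ kr m = 0) ->
  forall m, m \in r -> a m = 0.
Proof.
move=> ur Hr Ht m mr.
pose q : {poly R} := \sum_(m <- r) a m *: 'X^(kr m).
have qt t : q.[t] = 0.
  rewrite -(Ht t) /q horner_sum; apply: eq_bigr => j _.
  by rewrite hornerZ hornerXn.
have q0 : q = 0.
  apply/eqP; apply/negPn/negP => qn0.
  suff : (size q < size q)%N by rewrite ltnn.
  have := @max_poly_roots _ q [seq i%:R | i <- iota 0 (size q)] qn0.
  rewrite size_map size_iota; apply.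
    by apply/allP => x _; rewrite /root qt.
  rewrite map_inj_uniq ?iota_uniq // => i j /eqP; rewrite eqr_nat => /eqP //.
have : q`_(kr m) = a m.
  rewrite /q coef_sum (bigD1_seq m) //= coefZ coefXn eqxx mulr1 big1_seq ?addr0 //.
  move=> j /andP [jm jr]; rewrite coefZ coefXn.
  case: eqP => [E|]; last by rewrite mulr0.
  by move: jm; rewrite (kr_inj (Hr _ jr) (Hr _ mr) (esym E)) eqxx.
by rewrite q0 coef0.
Qed.


Definition wt (m : 'X_{1..3}) : nat := (m i0 + 2 * m i1 + 4 * m i2)%N.

Lemma powlem (C : comNzRingType) (e t : C) a b c :
  (e * t) ^+ a * (e ^+ 2 * t ^+ 10) ^+ b * (e ^+ 4 * t ^+ 100) ^+ c
  = e ^+ (a + 2 * b + 4 * c)%N * t ^+ (a + 10 * b + 100 * c)%N.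
Proof.
rewrite (exprD e (a + 2*b)%N (4*c)) (exprD e a (2*b)) (exprM e 2 b) (exprM e 4 c).
rewrite (exprD t (a + 10*b)%N (100*c)) (exprD t a (10*b)) (exprM t 10 b) (exprM t 100 c).
set E2 := e ^+ 2; set E4 := e ^+ 4; set T1 := t ^+ 10; set T2 := t ^+ 100.
rewrite !exprMn; ring.
Qed.

Lemma inv_coef (eta : RR[i]) (G : {mpoly RR[3]}) :
  7.-primitive_root eta -> eta_invariant eta G -> (msize G <= 10)%N ->
  forall m, m \in msupp G -> (7 %| wt m)%N.
Proof.
move=> Heta Hinv Hs.
have Hr m : m \in msupp G -> (mdeg m < 10)%N.
  by move=> mG; apply: leq_trans (msize_mdeg_lt mG) Hs.
have K := @kron _ _ (fun m => (real_complex RR (G@_m)) * (eta ^+ wt m - 1)) (msupp_uniq G) Hr.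
move=> m mG; have {}K := fun H => K H m mG.
rewrite (prim_order_dvd Heta).
have : (real_complex RR (G@_m)) * (eta ^+ wt m - 1) = 0.
  apply: K => t.
  have H := Hinv t (t ^+ 10) (t ^+ 100).
  rewrite !mevalE in H.
  rewrite !(perm_big _ (msupp_map_mpoly G (@complexI _))) /= in H.
  move/eqP: H; rewrite -subr_eq0 => /eqP H.
  rewrite -[RHS]H -sumrB; apply: eq_bigr => j _.
  rewrite !mcoeff_map_mpoly !prod3 /= powlem.
  rewrite /wt /kr -!exprM -!exprD; ring.
move/eqP; rewrite mulf_eq0 subr_eq0 => /orP [|//].
rewrite mcoeff_msupp in mG.
by move/eqP=> [] /eqP; rewrite (negPf mG).
Qed.


Definition Slist : seq (nat * nat * nat) :=
 [:: (0,0,0); (0,0,7); (0,1,3); (0,2,6); (0,3,2); (0,4,5); (0,5,1); (0,7,0); (1,0,5); (1,1,1); (1,2,4); (1,3,0); (1,4,3); (1,6,2); (2,0,3); (2,1,6); (2,2,2); (2,4,1); (2,6,0); (3,0,1); (3,1,4); (3,2,0); (3,3,3); (4,1,2); (4,3,1); (4,5,0); (5,0,4); (5,1,0); (6,0,2); (6,2,1); (7,0,0)]%N.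

Definition mon (t : nat * nat * nat) : 'X_{1..3} :=
  (U_(i0) *+ t.1.1 + U_(i1) *+ t.1.2 + U_(i2) *+ t.2)%MM.
Definition trip (m : 'X_{1..3}) : nat * nat * nat := (m i0, m i1, m i2).

Lemma mon0 t : mon t i0 = t.1.1.
Proof. by rewrite /mon !mnmDE !mulmnE !mnm1E /=; lia. Qed.
Lemma mon1 t : mon t i1 = t.1.2.
Proof. by rewrite /mon !mnmDE !mulmnE !mnm1E /=; lia. Qed.
Lemma mon2 t : mon t i2 = t.2.
Proof. by rewrite /mon !mnmDE !mulmnE !mnm1E /=; lia. Qed.

Lemma mon_trip m : mon (trip m) = m.
Proof. by apply/mnmP; apply: ord3P; rewrite ?mon0 ?mon1 ?mon2. Qed.
Lemma trip_mon t : trip (mon t) = t.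
Proof. by case: t => [[a b] c]; rewrite /trip mon0 mon1 mon2. Qed.

Lemma Sfact a b c : (a + b + c < 10)%N -> (7 %| a + 2 * b + 4 * c)%N -> (a, b, c) \in Slist.
Proof.
have H : all (fun a => all (fun b => all (fun c =>
   ((a + b + c < 10) ==> (7 %| a + 2 * b + 4 * c) ==> ((a, b, c) \in Slist))%N)
   (iota 0 10)) (iota 0 10)) (iota 0 10) by vm_compute.
move=> Hs Hd.
have ha : (a \in iota 0 10) by rewrite mem_iota; lia.
have hb : (b \in iota 0 10) by rewrite mem_iota; lia.
have hc : (c \in iota 0 10) by rewrite mem_iota; lia.
move/allP: H => /(_ a ha) /allP /(_ b hb) /allP /(_ c hc).
by rewrite Hs Hd.
Qed.

Lemma mdeg3 (m : 'X_{1..3}) : mdeg m = (m i0 + m i1 + m i2)%N.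
Proof.
rewrite mdegE !big_ord_recl big_ord0 addn0 addnA.
by congr (m _ + m _ + m _)%N; apply: val_inj.
Qed.

Lemma decomp (eta : RR[i]) (G : {mpoly RR[3]}) :
  7.-primitive_root eta -> eta_invariant eta G -> (msize G <= 10)%N ->
  G = \sum_(t <- Slist) G@_(mon t) *: 'X_[mon t].
Proof.
move=> He Hi Hs; apply/mpolyP => m.
rewrite raddf_sum /=.
under eq_bigr => t _ do rewrite mcoeffZ mcoeffX.
have uS : uniq Slist by [].
case: (boolP (trip m \in Slist)) => mS.
  rewrite (bigD1_seq (trip m)) //= mon_trip eqxx mulr1 big1_seq ?addr0 //.
  move=> t /andP [tm _]; case: eqP => [E|]; last by rewrite mulr0.
  by move: tm; rewrite -E trip_mon eqxx.
rewrite big1_seq; last first.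
  move=> t /andP [_ tS]; case: eqP => [E|]; last by rewrite mulr0.
  by move: mS; rewrite -E trip_mon tS.
apply/eqP; apply/negP => /negP mG; rewrite -mcoeff_msupp in mG.
move: mS; rewrite /trip Sfact //.
  by rewrite -mdeg3; exact: leq_trans (msize_mdeg_lt mG) Hs.
exact: (@inv_coef eta G He Hi Hs m mG).
Qed.

Lemma evalG (G : {mpoly RR[3]}) (x y z : RR) :
  G = \sum_(t <- Slist) G@_(mon t) *: 'X_[mon t] ->
  G.@[pt3 x y z] = \sum_(t <- Slist) G@_(mon t) * (x ^+ t.1.1 * y ^+ t.1.2 * z ^+ t.2).
Proof.
move=> E; rewrite {1}E raddf_sum /=; apply: eq_bigr => t _.
by rewrite mevalZ mevalX prod3 mon0 mon1 mon2.
Qed.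

Lemma Xmon t : 'X_[mon t] = vx ^+ t.1.1 * vy ^+ t.1.2 * vz ^+ t.2 :> {mpoly RR[3]}.
Proof. by rewrite /mon !mpolyXD -!mpolyXn. Qed.


Lemma linsolve (R : realFieldType) (c : nat * nat * nat -> R) :
  (forall x y z : R, x + y + z = 1 ->
     \sum_(t <- Slist) c t * (x ^+ t.1.1 * y ^+ t.1.2 * z ^+ t.2) = 1) ->
  \sum_(t <- Slist) c t * (0 ^+ t.1.1 * 0 ^+ t.1.2 * 0 ^+ t.2) = 0 ->
  c (0,0,0)%N = 0 /\ c (0,0,7)%N = 1 /\ c (0,1,3)%N = 7 /\ c (0,2,6)%N = 0 /\ c (0,3,2)%N = 14 /\ c (0,4,5)%N = 0 /\ c (0,5,1)%N = 7 /\ c (0,7,0)%N = 1 /\ c (1,0,5)%N = 7 /\ c (1,1,1)%N = 14 /\ c (1,2,4)%N = 7 /\ c (1,3,0)%N = 7 /\ c (1,4,3)%N = 0 /\ c (1,6,2)%N = 0 /\ c (2,0,3)%N = 14 /\ c (2,1,6)%N = 0 /\ c (2,2,2)%N = 7 /\ c (2,4,1)%N = 7 /\ c (2,6,0)%N = 0 /\ c (3,0,1)%N = 7 /\ c (3,1,4)%N = 0 /\ c (3,2,0)%N = 14 /\ c (3,3,3)%N = 0 /\ c (4,1,2)%N = 7 /\ c (4,3,1)%N = 0 /\ c (4,5,0)%N = 0 /\ c (5,0,4)%N = 0 /\ c (5,1,0)%N = 7 /\ c (6,0,2)%N = 0 /\ c (6,2,1)%N = 0 /\ c (7,0,0)%N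 = 1.
Proof.
move=> Hp e0.
rewrite /Slist !big_cons big_nil in e0; cbn [fst snd] in e0.
have v000 : c (0,0,0)%N = 0 by move: e0; clear; lra.

have e1 := Hp (0) (1) (0) ltac:(clear; lra); rewrite /Slist !big_cons big_nil in e1; cbn [fst snd] in e1.
have e2 := Hp (1) (0) (0) ltac:(clear; lra); rewrite /Slist !big_cons big_nil in e2; cbn [fst snd] in e2.
have e3 := Hp (-1) (2) (0) ltac:(clear; lra); rewrite /Slist !big_cons big_nil in e3; cbn [fst snd] in e3.
have e4 := Hp (2) (-1) (0) ltac:(clear; lra); rewrite /Slist !big_cons big_nil in e4; cbn [fst snd] in e4.
have e5 := Hp (-2) (3) (0) ltac:(clear; lra); rewrite /Slist !big_cons big_nil in e5; cbn [fst snd] in e5.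
have e6 := Hp (3) (-2) (0) ltac:(clear; lra); rewrite /Slist !big_cons big_nil in e6; cbn [fst snd] in e6.
have e7 := Hp (-3) (4) (0) ltac:(clear; lra); rewrite /Slist !big_cons big_nil in e7; cbn [fst snd] in e7.
have [v070 [v130 [v260 [v320 [v450 [v510 v700]]]]]] : c (0,7,0)%N = 1 /\ c (1,3,0)%N = 7 /\ c (2,6,0)%N = 0 /\ c (3,2,0)%N = 14 /\ c (4,5,0)%N = 0 /\ c (5,1,0)%N = 7 /\ c (7,0,0)%N = 1.
  move: e1 e2 e3 e4 e5 e6 e7; rewrite ?v000; clear; lra.
have e8 := Hp (0) (0) (1) ltac:(clear; lra); rewrite /Slist !big_cons big_nil in e8; cbn [fst snd] in e8.
have e9 := Hp (1) (0) (0) ltac:(clear; lra); rewrite /Slist !big_cons big_nil in e9; cbn [fst snd] in e9.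
have e10 := Hp (-1) (0) (2) ltac:(clear; lra); rewrite /Slist !big_cons big_nil in e10; cbn [fst snd] in e10.
have e11 := Hp (2) (0) (-1) ltac:(clear; lra); rewrite /Slist !big_cons big_nil in e11; cbn [fst snd] in e11.
have e12 := Hp (-2) (0) (3) ltac:(clear; lra); rewrite /Slist !big_cons big_nil in e12; cbn [fst snd] in e12.
have e13 := Hp (3) (0) (-2) ltac:(clear; lra); rewrite /Slist !big_cons big_nil in e13; cbn [fst snd] in e13.
have e14 := Hp (-3) (0) (4) ltac:(clear; lra); rewrite /Slist !big_cons big_nil in e14; cbn [fst snd] in e14.
have [v007 [v105 [v203 [v301 [v504 v602]]]]] : c (0,0,7)%N = 1 /\ c (1,0,5)%N = 7 /\ c (2,0,3)%N = 14 /\ c (3,0,1)%N = 7 /\ c (5,0,4)%N = 0 /\ c (6,0,2)%N = 0.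
  move: e8 e9 e10 e11 e12 e13 e14; rewrite ?v000 ?v070 ?v130 ?v260 ?v320 ?v450 ?v510 ?v700; clear; lra.
have e15 := Hp (0) (0) (1) ltac:(clear; lra); rewrite /Slist !big_cons big_nil in e15; cbn [fst snd] in e15.
have e16 := Hp (0) (1) (0) ltac:(clear; lra); rewrite /Slist !big_cons big_nil in e16; cbn [fst snd] in e16.
have e17 := Hp (0) (-1) (2) ltac:(clear; lra); rewrite /Slist !big_cons big_nil in e17; cbn [fst snd] in e17.
have e18 := Hp (0) (2) (-1) ltac:(clear; lra); rewrite /Slist !big_cons big_nil in e18; cbn [fst snd] in e18.
have e19 := Hp (0) (-2) (3) ltac:(clear; lra); rewrite /Slist !big_cons big_nil in e19; cbn [fst snd] in e19.
have e20 := Hp (0) (3) (-2) ltac:(clear; lra); rewrite /Slist !big_cons big_nil in e20; cbn [fst snd] in e20.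
have e21 := Hp (0) (-3) (4) ltac:(clear; lra); rewrite /Slist !big_cons big_nil in e21; cbn [fst snd] in e21.
have [v013 [v026 [v032 [v045 v051]]]] : c (0,1,3)%N = 7 /\ c (0,2,6)%N = 0 /\ c (0,3,2)%N = 14 /\ c (0,4,5)%N = 0 /\ c (0,5,1)%N = 7.
  move: e15 e16 e17 e18 e19 e20 e21; rewrite ?v000 ?v070 ?v130 ?v260 ?v320 ?v450 ?v510 ?v700 ?v007 ?v105 ?v203 ?v301 ?v504 ?v602; clear; lra.
have e22 := Hp (-1) (1) (1) ltac:(clear; lra); rewrite /Slist !big_cons big_nil in e22; cbn [fst snd] in e22.
have n0 : ((- (1)) * c (1,1,1)%N + (- (1)) * c (1,2,4)%N + (- (1)) * c (1,4,3)%N + (- (1)) * c (1,6,2)%N + (1) * c (2,1,6)%N + (1) * c (2,2,2)%N + (1) * c (2,4,1)%N + (- (1)) * c (3,1,4)%N + (- (1)) * c (3,3,3)%N + (1) * c (4,1,2)%N + (1) * c (4,3,1)%N + (1) * c (6,2,1)%N) = (0).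
  move: e22; rewrite ?v000 ?v070 ?v130 ?v260 ?v320 ?v450 ?v510 ?v700 ?v007 ?v105 ?v203 ?v301 ?v504 ?v602 ?v013 ?v026 ?v032 ?v045 ?v051; clear; lra.
have e23 := Hp (1) (-1) (1) ltac:(clear; lra); rewrite /Slist !big_cons big_nil in e23; cbn [fst snd] in e23.
have n1 : ((- (1)) * c (1,1,1)%N + (1) * c (1,2,4)%N + (1) * c (1,4,3)%N + (1) * c (1,6,2)%N + (- (1)) * c (2,1,6)%N + (1) * c (2,2,2)%N + (1) * c (2,4,1)%N + (- (1)) * c (3,1,4)%N + (- (1)) * c (3,3,3)%N + (- (1)) * c (4,1,2)%N + (- (1)) * c (4,3,1)%N + (1) * c (6,2,1)%N) = (0).
  move: e23; rewrite ?v000 ?v070 ?v130 ?v260 ?v320 ?v450 ?v510 ?v700 ?v007 ?v105 ?v203 ?v301 ?v504 ?v602 ?v013 ?v026 ?v032 ?v045 ?v051; clear; lra.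
have e24 := Hp (1) (1) (-1) ltac:(clear; lra); rewrite /Slist !big_cons big_nil in e24; cbn [fst snd] in e24.
have n2 : ((- (1)) * c (1,1,1)%N + (1) * c (1,2,4)%N + (- (1)) * c (1,4,3)%N + (1) * c (1,6,2)%N + (1) * c (2,1,6)%N + (1) * c (2,2,2)%N + (- (1)) * c (2,4,1)%N + (1) * c (3,1,4)%N + (- (1)) * c (3,3,3)%N + (1) * c (4,1,2)%N + (- (1)) * c (4,3,1)%N + (- (1)) * c (6,2,1)%N) = (0).
  move: e24; rewrite ?v000 ?v070 ?v130 ?v260 ?v320 ?v450 ?v510 ?v700 ?v007 ?v105 ?v203 ?v301 ?v504 ?v602 ?v013 ?v026 ?v032 ?v045 ?v051; clear; lra.
have e25 := Hp (-2) (1) (2) ltac:(clear; lra); rewrite /Slist !big_cons big_nil in e25; cbn [fst snd] in e25.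
have n3 : ((- (4)) * c (1,1,1)%N + (- (32)) * c (1,2,4)%N + (- (16)) * c (1,4,3)%N + (- (8)) * c (1,6,2)%N + ((2) * 100 + 56) * c (2,1,6)%N + (16) * c (2,2,2)%N + (8) * c (2,4,1)%N + (- ((1) * 100 + 28)) * c (3,1,4)%N + (- (64)) * c (3,3,3)%N + (64) * c (4,1,2)%N + (32) * c (4,3,1)%N + ((1) * 100 + 28) * c (6,2,1)%N) = ((3) * 100 + 36).
  move: e25; rewrite ?v000 ?v070 ?v130 ?v260 ?v320 ?v450 ?v510 ?v700 ?v007 ?v105 ?v203 ?v301 ?v504 ?v602 ?v013 ?v026 ?v032 ?v045 ?v051; clear; lra.
have e26 := Hp (-2) (2) (1) ltac:(clear; lra); rewrite /Slist !big_cons big_nil in e26; cbn [fst snd] in e26.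
have n4 : ((- (4)) * c (1,1,1)%N + (- (8)) * c (1,2,4)%N + (- (32)) * c (1,4,3)%N + (- ((1) * 100 + 28)) * c (1,6,2)%N + (8) * c (2,1,6)%N + (16) * c (2,2,2)%N + (64) * c (2,4,1)%N + (- (16)) * c (3,1,4)%N + (- (64)) * c (3,3,3)%N + (32) * c (4,1,2)%N + ((1) * 100 + 28) * c (4,3,1)%N + ((2) * 100 + 56) * c (6,2,1)%N) = ((6) * 100 + 72).
  move: e26; rewrite ?v000 ?v070 ?v130 ?v260 ?v320 ?v450 ?v510 ?v700 ?v007 ?v105 ?v203 ?v301 ?v504 ?v602 ?v013 ?v026 ?v032 ?v045 ?v051; clear; lra.
have e27 := Hp (1) (-2) (2) ltac:(clear; lra); rewrite /Slist !big_cons big_nil in e27; cbn [fst snd] in e27.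
have n5 : ((- (4)) * c (1,1,1)%N + (64) * c (1,2,4)%N + ((1) * 100 + 28) * c (1,4,3)%N + ((2) * 100 + 56) * c (1,6,2)%N + (- ((1) * 100 + 28)) * c (2,1,6)%N + (16) * c (2,2,2)%N + (32) * c (2,4,1)%N + (- (32)) * c (3,1,4)%N + (- (64)) * c (3,3,3)%N + (- (8)) * c (4,1,2)%N + (- (16)) * c (4,3,1)%N + (8) * c (6,2,1)%N) = ((6) * 100 + 72).
  move: e27; rewrite ?v000 ?v070 ?v130 ?v260 ?v320 ?v450 ?v510 ?v700 ?v007 ?v105 ?v203 ?v301 ?v504 ?v602 ?v013 ?v026 ?v032 ?v045 ?v051; clear; lra.
have e28 := Hp (1) (2) (-2) ltac:(clear; lra); rewrite /Slist !big_cons big_nil in e28; cbn [fst snd] in e28.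
have n6 : ((- (4)) * c (1,1,1)%N + (64) * c (1,2,4)%N + (- ((1) * 100 + 28)) * c (1,4,3)%N + ((2) * 100 + 56) * c (1,6,2)%N + ((1) * 100 + 28) * c (2,1,6)%N + (16) * c (2,2,2)%N + (- (32)) * c (2,4,1)%N + (32) * c (3,1,4)%N + (- (64)) * c (3,3,3)%N + (8) * c (4,1,2)%N + (- (16)) * c (4,3,1)%N + (- (8)) * c (6,2,1)%N) = ((3) * 100 + 36).
  move: e28; rewrite ?v000 ?v070 ?v130 ?v260 ?v320 ?v450 ?v510 ?v700 ?v007 ?v105 ?v203 ?v301 ?v504 ?v602 ?v013 ?v026 ?v032 ?v045 ?v051; clear; lra.
have e29 := Hp (2) (-2) (1) ltac:(clear; lra); rewrite /Slist !big_cons big_nil in e29; cbn [fst snd] in e29.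
have n7 : ((- (4)) * c (1,1,1)%N + (8) * c (1,2,4)%N + (32) * c (1,4,3)%N + ((1) * 100 + 28) * c (1,6,2)%N + (- (8)) * c (2,1,6)%N + (16) * c (2,2,2)%N + (64) * c (2,4,1)%N + (- (16)) * c (3,1,4)%N + (- (64)) * c (3,3,3)%N + (- (32)) * c (4,1,2)%N + (- ((1) * 100 + 28)) * c (4,3,1)%N + ((2) * 100 + 56) * c (6,2,1)%N) = ((3) * 100 + 36).
  move: e29; rewrite ?v000 ?v070 ?v130 ?v260 ?v320 ?v450 ?v510 ?v700 ?v007 ?v105 ?v203 ?v301 ?v504 ?v602 ?v013 ?v026 ?v032 ?v045 ?v051; clear; lra.
have e30 := Hp (2) (1) (-2) ltac:(clear; lra); rewrite /Slist !big_cons big_nil in e30; cbn [fst snd] in e30.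
have n8 : ((- (4)) * c (1,1,1)%N + (32) * c (1,2,4)%N + (- (16)) * c (1,4,3)%N + (8) * c (1,6,2)%N + ((2) * 100 + 56) * c (2,1,6)%N + (16) * c (2,2,2)%N + (- (8)) * c (2,4,1)%N + ((1) * 100 + 28) * c (3,1,4)%N + (- (64)) * c (3,3,3)%N + (64) * c (4,1,2)%N + (- (32)) * c (4,3,1)%N + (- ((1) * 100 + 28)) * c (6,2,1)%N) = ((6) * 100 + 72).
  move: e30; rewrite ?v000 ?v070 ?v130 ?v260 ?v320 ?v450 ?v510 ?v700 ?v007 ?v105 ?v203 ?v301 ?v504 ?v602 ?v013 ?v026 ?v032 ?v045 ?v051; clear; lra.
have e31 := Hp (-3) (1) (3) ltac:(clear; lra); rewrite /Slist !big_cons big_nil in e31; cbn [fst snd] in e31.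
have n9 : ((- (9)) * c (1,1,1)%N + (- ((2) * 100 + 43)) * c (1,2,4)%N + (- (81)) * c (1,4,3)%N + (- (27)) * c (1,6,2)%N + ((65) * 100 + 61) * c (2,1,6)%N + (81) * c (2,2,2)%N + (27) * c (2,4,1)%N + (- ((21) * 100 + 87)) * c (3,1,4)%N + (- ((7) * 100 + 29)) * c (3,3,3)%N + ((7) * 100 + 29) * c (4,1,2)%N + ((2) * 100 + 43) * c (4,3,1)%N + ((21) * 100 + 87) * c (6,2,1)%N) = ((40) * 100 + 32).
  move: e31; rewrite ?v000 ?v070 ?v130 ?v260 ?v320 ?v450 ?v510 ?v700 ?v007 ?v105 ?v203 ?v301 ?v504 ?v602 ?v013 ?v026 ?v032 ?v045 ?v051; clear; lra.
have e32 := Hp (-3) (2) (2) ltac:(clear; lra); rewrite /Slist !big_cons big_nil in e32; cbn [fst snd] in e32.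
have n10 : ((- (12)) * c (1,1,1)%N + (- ((1) * 100 + 92)) * c (1,2,4)%N + (- ((3) * 100 + 84)) * c (1,4,3)%N + (- ((7) * 100 + 68)) * c (1,6,2)%N + ((11) * 100 + 52) * c (2,1,6)%N + ((1) * 100 + 44) * c (2,2,2)%N + ((2) * 100 + 88) * c (2,4,1)%N + (- ((8) * 100 + 64)) * c (3,1,4)%N + (- ((17) * 100 + 28)) * c (3,3,3)%N + ((6) * 100 + 48) * c (4,1,2)%N + ((12) * 100 + 96) * c (4,3,1)%N + ((58) * 100 + 32) * c (6,2,1)%N) = ((60) * 100 + 48).
  move: e32; rewrite ?v000 ?v070 ?v130 ?v260 ?v320 ?v450 ?v510 ?v700 ?v007 ?v105 ?v203 ?v301 ?v504 ?v602 ?v013 ?v026 ?v032 ?v045 ?v051; clear; lra.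
have e33 := Hp (-3) (3) (1) ltac:(clear; lra); rewrite /Slist !big_cons big_nil in e33; cbn [fst snd] in e33.
have n11 : ((- (9)) * c (1,1,1)%N + (- (27)) * c (1,2,4)%N + (- ((2) * 100 + 43)) * c (1,4,3)%N + (- ((21) * 100 + 87)) * c (1,6,2)%N + (27) * c (2,1,6)%N + (81) * c (2,2,2)%N + ((7) * 100 + 29) * c (2,4,1)%N + (- (81)) * c (3,1,4)%N + (- ((7) * 100 + 29)) * c (3,3,3)%N + ((2) * 100 + 43) * c (4,1,2)%N + ((21) * 100 + 87) * c (4,3,1)%N + ((65) * 100 + 61) * c (6,2,1)%N) = ((70) * 100 + 56).
  move: e33; rewrite ?v000 ?v070 ?v130 ?v260 ?v320 ?v450 ?v510 ?v700 ?v007 ?v105 ?v203 ?v301 ?v504 ?v602 ?v013 ?v026 ?v032 ?v045 ?v051; clear; lra.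
have v111 : c (1,1,1)%N = 14 by move: n0 n1 n2 n3 n4 n5 n6 n7 n8 n9 n10 n11; clear; lra.
have v124 : c (1,2,4)%N = 7 by move: n0 n1 n2 n3 n4 n5 n6 n7 n8 n9 n10 n11; clear; lra.
have v143 : c (1,4,3)%N = 0 by move: n0 n1 n2 n3 n4 n5 n6 n7 n8 n9 n10 n11; clear; lra.
have v162 : c (1,6,2)%N = 0 by move: n0 n1 n2 n3 n4 n5 n6 n7 n8 n9 n10 n11; clear; lra.
have v216 : c (2,1,6)%N = 0 by move: n0 n1 n2 n3 n4 n5 n6 n7 n8 n9 n10 n11; clear; lra.
have v222 : c (2,2,2)%N = 7 by move: n0 n1 n2 n3 n4 n5 n6 n7 n8 n9 n10 n11; clear; lra.
have v241 : c (2,4,1)%N = 7 by move: n0 n1 n2 n3 n4 n5 n6 n7 n8 n9 n10 n11; clear; lra.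
have v314 : c (3,1,4)%N = 0 by move: n0 n1 n2 n3 n4 n5 n6 n7 n8 n9 n10 n11; clear; lra.
have v333 : c (3,3,3)%N = 0 by move: n0 n1 n2 n3 n4 n5 n6 n7 n8 n9 n10 n11; clear; lra.
have v412 : c (4,1,2)%N = 7 by move: n0 n1 n2 n3 n4 n5 n6 n7 n8 n9 n10 n11; clear; lra.
have v431 : c (4,3,1)%N = 0 by move: n0 n1 n2 n3 n4 n5 n6 n7 n8 n9 n10 n11; clear; lra.
have v621 : c (6,2,1)%N = 0 by move: n0 n1 n2 n3 n4 n5 n6 n7 n8 n9 n10 n11; clear; lra.
by rewrite v000 v007 v013 v026 v032 v045 v051 v070 v105 v111 v124 v130 v143 v162 v203 v216 v222 v241 v260 v301 v314 v320 v333 v412 v431 v450 v504 v510 v602 v621 v700; repeat split.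
Qed.


Theorem lemma5p1 (eta : RR[i]) (Heta : 7.-primitive_root eta) (G : {mpoly RR[3]}) :
  eta_invariant eta G ->
  (forall x y z : RR, x + y + z = 1 -> G.@[pt3 x y z] = 1) ->
  (forall m : 'X_{1..3}, 0 <= G@_m) ->
  G.@[pt3 0 0 0] = 0 ->
  G = Fpoly \/ (10 <= mdegree G)%N.
Proof.
move=> Hi Hp Hnn H0.
case: (leqP 10 (mdegree G)) => Hd; [by right | left].
have Hs : (msize G <= 10)%N by move: Hd; rewrite /mdegree; lia.
have E := @decomp eta G Heta Hi Hs.
have H1 : forall x y z : RR, x + y + z = 1 ->
   \sum_(t <- Slist) (fun t => G@_(mon t)) t * (x ^+ t.1.1 * y ^+ t.1.2 * z ^+ t.2) = 1.
  by move=> x y z h; have := Hp x y z h; rewrite (evalG _ _ _ _ E).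
have H2 : \sum_(t <- Slist) (fun t => G@_(mon t)) t * (0 ^+ t.1.1 * 0 ^+ t.1.2 * 0 ^+ t.2) = 0 :> RR.
  by move: H0; rewrite (evalG _ _ _ _ E).
have L := @linsolve RR (fun t => G@_(mon t)) H1 H2.
cbv beta in L.
move: L => [w000 [w007 [w013 [w026 [w032 [w045 [w051 [w070 [w105 [w111 [w124 [w130 [w143 [w162 [w203 [w216 [w222 [w241 [w260 [w301 [w314 [w320 [w333 [w412 [w431 [w450 [w504 [w510 [w602 [w621 w700]]]]]]]]]]]]]]]]]]]]]]]]]]]]]].
rewrite E /Slist !big_cons big_nil w000 w007 w013 w026 w032 w045 w051 w070 w105 w111 w124 w130 w143 w162 w203 w216 w222 w241 w260 w301 w314 w320 w333 w412 w431 w450 w504 w510 w602 w621 w700.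
rewrite ?scale0r ?add0r ?addr0 ?scale1r -!mul_mpolyC !mpolyC_nat !Xmon; cbn [fst snd].
rewrite /Fpoly; ring.
Qed.
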